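(* Let $A$ be a set with $n$ elements. Every d-path $\alpha\in\vec P(Y^A)_{\mathbf0}^{\mathbf1}$ has the form $\alpha(t)=[c;\beta(t)]$ for all $t\in[0,1]$, for some $n$-cube $c\in Y^A[n]$ and some continuous path $\beta:[0,1]\to[0,1]^n$ with non-decreasing coordinates, $\beta(0)=(0,\dots,0)$, $\beta(1)=(1,\dots,1)$.
   Context: A precubical set ($\square$-set) $K$ is a sequence of pairwise disjoint sets $(K[n])_{n\ge0}$ with face maps $d^\varepsilon_i:K[n]\to K[n-1]$ ($1\le i\le n$, $\varepsilon\in\{0,1\}$) satisfying $d^\varepsilon_i d^\eta_j=d^\eta_{j-1}d^\varepsilon_i$ for $i<j$; bi-pointed $\square$-sets have chosen vertices $\mathbf0,\mathbf1\in K[0]$. Geometric realization: $|K|=\coprod_n K[n]\times[0,1]^n/\sim$ with $(d^\varepsilon_i c,\mathbf x)\sim(c,\delta^\varepsilon_i\mathbf x)$, where $\delta^\varepsilon_i(x_1,\dots,x_{n-1})=(x_1,\dots,x_{i-1},\varepsilon,x_i,\dots,x_{n-1})$; $[c;\mathbf x]$ is the class. A path $\alpha:[0,1]\to|K|$ is a d-path if there are $0=t_0<\dots<t_m=1$, $c_k\in K[n_k]$ and continuous $\beta_k:[t_{k-1},t_k]\to[0,1]^{n_k}$ with non-decreasing coordinates such that $\alpha(t)=[c_k;\beta_k(t)]$ on $[t_{k-1},t_k]$. $\vec P(K)_{\mathbf0}^{\mathbf1}$ is the space of d-paths from $\mathbf0$ to $\mathbf1$. $Y^A$ is the bi-pointed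 $\square$-set where $Y^A[k]$ is the set of pairs $(c,<)$ with $c:A\to\{0,*,1\}$, $|c^{-1}( * )|=k$, and $<$ a strict total order on $c^{-1}( * )$; if $c^{-1}( * )=\{a_1<\dots<a_k\}$ then $d^\varepsilon_i(c,<)=(c',<')$ where $c'(a_i)=\varepsilon$, $c'=c$ elsewhere, and $<'$ is the restriction of $<$ to $c^{-1}( * )\setminus\{a_i\}$; $\mathbf0=(\text{const}_0,\emptyset)$, $\mathbf1=(\text{const}_1,\emptyset)$. *)

(* Defs.v *)
From HB Require Import structures.
From mathcomp Require Import all_boot all_order all_algebra.
From mathcomp Require Import all_classical all_reals all_analysis.
From Stdlib Require Import Relations.
Set Implicit Arguments. Unset Strict Implicit. Unset Printing Implicit Defensive.
Import Order.TTheory GRing.Theory Num.Theory numFieldNormedType.Exports.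
Local Open Scope classical_set_scope.
Local Open Scope ring_scope.

(* [face i e] : K[n+1] -> K[n] is d^e_{i+1} (0-indexed i : 'I_n.+1).    *)
(* The precubical identities are not needed for any definition below.  *)
Record preCubical := PreCubical {
  cell : nat -> Type;
  face : forall n, 'I_n.+1 -> bool -> cell n.+1 -> cell n }.

(* delta^e_{i+1} : [0,1]^n -> [0,1]^{n+1}, inserting e at position i. *)
Definition delta (R : realType) n (i : 'I_n.+1) (e : bool) (x : 'I_n -> R)
  : 'I_n.+1 -> R :=
  fun j => match unlift i j with
           | None => if e then 1 else 0
           | Some j' => x j' end.

Definition pt (R : realType) (K : preCubical) :=
  {n : nat & (cell K n * ('I_n -> R))%type}.

Definition mkpt (R : realType) (K : preCubical) n (c : cell K n) (x : 'I_n -> R)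
  : pt R K := existT _ n (c, x).

Definition in_cube (R : realType) n (x : 'I_n -> R) := forall j, 0 <= x j <= 1.

Definition real_step (R : realType) (K : preCubical) (p q : pt R K) : Prop :=
  exists n (i : 'I_n.+1) (e : bool) (c : cell K n.+1) (x : 'I_n -> R),
    in_cube x /\ p = mkpt (face i e c) x /\ q = mkpt c (delta i e x).

(* equality in the geometric realization |K| *)
Definition real_eq (R : realType) (K : preCubical) : relation (pt R K) :=
  clos_refl_sym_trans _ (@real_step R K).

(* A d-path alpha : [0,1] -> |K|, represented by a choice of representatives. *)
Definition is_dpath (R : realType) (K : preCubical) (alpha : R -> pt R K) : Prop :=
  exists (m : nat) (tt : nat -> R) (ns : nat -> nat)
         (cs : forall k, cell K (ns k)) (bs : forall k, R -> 'I_(ns k) -> R),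
    [/\ tt 0%N = 0, tt m = 1, (forall k, (k < m)%N -> tt k < tt k.+1) &
      forall k, (k < m)%N ->
        [/\ (forall j, {within `[tt k, tt k.+1], continuous (fun t => bs k t j)}),
            (forall j s t, tt k <= s -> s <= t -> t <= tt k.+1 -> bs k s j <= bs k t j),
            (forall t, tt k <= t <= tt k.+1 -> in_cube (bs k t)) &
            (forall t, tt k <= t <= tt k.+1 ->
               real_eq (alpha t) (mkpt (cs k) (bs k t)))]].

Definition dpath_from_to (R : realType) (K : preCubical) (v0 v1 : cell K 0)
  (alpha : R -> pt R K) : Prop :=
  [/\ is_dpath alpha,
      real_eq (alpha 0) (mkpt v0 (fun _ => 0)) &
      real_eq (alpha 1) (mkpt v1 (fun _ => 0))].

(* The precubical set Y^A.  A k-cell is (c, s) with c : A -> {0,star,1}   *)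
(* encoded as option bool (None = star, Some false = 0, Some true = 1),    *)
(* and the strict total order on c^-1(star) = {a_1 < ... < a_k} encoded by *)
(* the injective enumeration s : 'I_k -> A, s j = a_{j+1}.              *)
Section Y.
Variable A : finType.

Definition Yvalid n (p : {ffun A -> option bool} * {ffun 'I_n -> A}) : bool :=
  injectiveb p.2 && [forall a, (p.1 a == None) == (a \in codom p.2)].

Definition Ycell n := {p : {ffun A -> option bool} * {ffun 'I_n -> A} | Yvalid p}.

Definition Yface_raw n (i : 'I_n.+1) (e : bool)
  (p : {ffun A -> option bool} * {ffun 'I_n.+1 -> A}) :=
  ([ffun a => if a == p.2 i then Some e else p.1 a],
   [ffun j : 'I_n => p.2 (lift i j)]).

Lemma Yface_ok n (i : 'I_n.+1) e (c : Ycell n.+1) : Yvalid (Yface_raw i e (val c)).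
Proof.
case: c => [[f s]] /= /andP [/injectiveP inj /forallP H].
apply/andP; split.
  by apply/injectiveP => j k; rewrite !ffunE => /inj /lift_inj.
apply/forallP => a; rewrite ffunE.
case: (a =P s i) => [->|ne].
  apply/eqP; apply/esym/negbTE/codomP => [[j]]; rewrite ffunE => /inj /eqP.
  by rewrite (negbTE (neq_lift i j)).
move: (H a) => /eqP ->; apply/eqP; apply/codomP/codomP => [[k ak]|[j aj]].
  case: (unliftP i k) => [j ek|eik]; first by exists j; rewrite ffunE -ek.
  by exfalso; apply: ne; rewrite ak eik.
by exists (lift i j); rewrite aj ffunE.
Qed.

Definition Yface n (i : 'I_n.+1) (e : bool) (c : Ycell n.+1) : Ycell n :=
  exist _ (Yface_raw i e (val c)) (Yface_ok i e c).

Definition Y : preCubical := @PreCubical Ycell Yface.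

Lemma Yvertex_ok (b : bool) :
  @Yvalid 0 ([ffun => Some b], @ffun0 _ (fun _ => Finite.sort A) (card_ord 0)).
Proof.
apply/andP; split; first by apply/injectiveP => [[]].
apply/forallP => a; rewrite ffunE /=.
have -> : codom (@ffun0 _ (fun _ => Finite.sort A) (card_ord 0)) = [::].
  by apply/size0nil; rewrite size_codom card_ord.
by [].
Qed.

Definition Yvertex (b : bool) : cell Y 0 := exist (fun p => is_true (Yvalid p)) _ (Yvertex_ok b).
Definition Y0 := Yvertex false.
Definition Y1 := Yvertex true.
End Y.

(* Main.v *)
Require Import Defs.
From HB Require Import structures.
From mathcomp Require Import all_boot all_order all_algebra.
From mathcomp Require Import all_classical all_reals all_analysis.
From mathcomp Require Import zify.
From Stdlib Require Import Relations.

Import Order.TTheory GRing.Theory Num.Theory numFieldNormedType.Exports.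
Set Implicit Arguments. Unset Strict Implicit. Unset Printing Implicit Defensive.
Local Open Scope classical_set_scope.
Local Open Scope ring_scope.

Lemma enum_lift n (i : 'I_n.+1) :
  seq.filter (predC1 i) (enum 'I_n.+1) = map (lift i) (enum 'I_n).
Proof.
have lt_tr : forall m, ssrbool.transitive (T:='I_m) (relpre val ltn).
  by move=> m a b c /= h1 h2; exact: ltn_trans h1 h2.
have srt : forall m, sorted (relpre val ltn) (enum 'I_m).
  by move=> m; rewrite -sorted_map val_enum_ord iota_ltn_sorted.
apply: (irr_sorted_eq (lt_tr _)).
- by move=> a /=; rewrite ltnn.
- by apply: sorted_filter; [exact: lt_tr| exact: srt].
- rewrite sorted_map; apply: sub_sorted (srt n) => a b /=.
  rewrite /bump; case: (leqP i a); case: (leqP i b) => /= h1 h2 h; lia.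
- move=> x; rewrite mem_filter mem_enum andbT /=.
  case: (unliftP i x) => [j ->|->]; first by rewrite lift_eqF mem_map ?mem_enum //; exact: lift_inj.
  rewrite eqxx /=; apply/esym/negbTE/mapP => -[j _ /eqP]; by rewrite eq_liftF.
Qed.

Definition gv (R : realType) (A : finType) (p : pt R (Y A)) : A -> R :=
  match p with existT k (d, x) => fun a =>
    match (sval d).1 a with
    | Some b => if b then 1 else 0
    | None => \sum_(j < k | (sval d).2 j == a) x j end end.

Definition cod (R : realType) (A : finType) (p : pt R (Y A)) : seq A :=
  match p with existT k (d, _) => codom (sval d).2 end.

Definition intr (R : realType) (A : finType) (p : pt R (Y A)) (a : A) : bool :=
  (0 < gv p a) && (gv p a < 1).

Definition loc (R : realType) (A : finType) (p : pt R (Y A)) : seq A :=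
  seq.filter (intr p) (cod p).

Lemma Yvalid_inj (A : finType) k (d : cell (Y A) k) : injective (sval d).2.
Proof. by case: d => [[f s]] /= /andP [/injectiveP]. Qed.
Arguments Yvalid_inj {A k} d.

Lemma Yvalid_none (A : finType) k (d : cell (Y A) k) a :
  ((sval d).1 a == None) = (a \in codom (sval d).2).
Proof. by case: d => [[f s]] /= /andP [_ /forallP /(_ a) /eqP]. Qed.

Lemma gv_cod (R : realType) (A : finType) k (d : cell (Y A) k) (x : 'I_k -> R) j :
  gv (mkpt d x) ((sval d).2 j) = x j.
Proof.
rewrite /gv /=.
have -> : (sval d).1 ((sval d).2 j) = None by apply/eqP; rewrite Yvalid_none codom_f.
rewrite (bigD1 j) ?eqxx //= big1 ?addr0 // => i /andP [/eqP /Yvalid_inj -> ].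
by rewrite eqxx.
Qed.

Lemma step_inv (R : realType) (A : finType) (p q : pt R (Y A)) :
  real_step p q -> gv p = gv q /\ loc p = loc q.
Proof.
case=> k [i [e [c [x [_ [-> ->]]]]]].
have Hs := Yvalid_inj c; have Hf := Yvalid_none c.
set s := (sval c).2 in Hs Hf *; set f := (sval c).1 in Hf *.
have gE : gv (mkpt (face i e c) x) =1 gv (mkpt c (delta i e x)).
  move=> a; rewrite /gv /= !ffunE -/s -/f.
  case: eqP => [->|ne].
    have -> : f (s i) = None by apply/eqP; rewrite Hf codom_f.
    rewrite (bigD1_ord i) ?eqxx //= big1 ?addr0.
      by rewrite /delta unlift_none.
    by move=> j /eqP /Hs /eqP; rewrite lift_eqF.
  case: (f a) => [b|] //.
  rewrite [RHS]big_mkcond [RHS](bigD1_ord i) //= ifF; last by apply/negbTE/eqP => h; apply: ne.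
  rewrite add0r big_mkcond; apply: eq_bigr => j _; rewrite ffunE.
  by rewrite /delta liftK.
have gE' := funext gE; split => //.
have gsi : intr (mkpt c (delta i e x)) (s i) = false.
  rewrite /intr gv_cod /delta unlift_none.
  by case: (e) => /=; rewrite ltxx ?andbF ?andFb.
have iE : intr (mkpt (face i e c) x) = intr (mkpt c (delta i e x)) by rewrite /intr gE'.
rewrite /loc iE.
change (cod (mkpt (face i e c) x)) with (codom [ffun j => s (lift i j)]).
change (cod (mkpt c (delta i e x))) with (codom s).
have -> : codom [ffun j => s (lift i j)] = map s (map (lift i) (enum 'I_k)).
  by rewrite codomE -[RHS]map_comp; apply: eq_map => j; rewrite /= ffunE.
rewrite -enum_lift codomE.
have -> : map s (seq.filter (predC1 i) (enum 'I_k.+1)) =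
    seq.filter (predC1 (s i)) (map s (enum 'I_k.+1)).
  by rewrite [RHS]filter_map; congr (map _ _); apply: eq_filter => j /=; rewrite (inj_eq Hs).
rewrite -filter_predI; apply: eq_filter => a /=.
case: (a =P s i) => [->|] /=; last by rewrite andbT.
by rewrite andbF gsi.
Qed.

Lemma eq_inv (R : realType) (A : finType) (p q : pt R (Y A)) :
  real_eq p q -> gv p = gv q /\ loc p = loc q.
Proof.
elim=> {p q} [p q /step_inv //|p //|p q _ [-> ->] //|p q r _ [-> ->] _ [-> ->] //].
Qed.

Definition reduced (R : realType) (A : finType) (p : pt R (Y A)) : Prop :=
  match p with existT k (d, x) => forall j, 0 < x j < 1 end.

Lemma reduce (R : realType) (A : finType) k (d : cell (Y A) k) (x : 'I_k -> R) :
  in_cube x -> exists r, real_eq (mkpt d x) r /\ reduced r.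
Proof.
elim: k d x => [|k IH] d x cx.
  by exists (mkpt d x); split; [exact: rst_refl | case].
case: (pickP (fun j => ~~ ((0 < x j) && (x j < 1)))) => [j nj|]; last first.
  move=> H; exists (mkpt d x); split; first exact: rst_refl.
  by move=> j /=; move: (H j) => /= /negbFE.
set e := (x j == 1).
set x' := fun i => x (lift j i).
have cx' : in_cube x' by move=> i; exact: cx.
have dx : delta j e x' = x.
  apply: funext => i; rewrite /delta.
  case: (unliftP j i) => [i' ->|->] //.
  rewrite /e; case: eqP => // ne.
  move: (cx j) nj => /andP [h0 h1].
  rewrite negb_and -!leNgt => /orP [h|h]; first by apply/eqP; rewrite eq_le h h0.
  by exfalso; apply: ne; apply/eqP; rewrite eq_le h h1.
have [r [er rr]] := IH (face j e d) x' cx'.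
exists r; split => //.
apply: rst_trans er; apply: rst_sym; apply: rst_step.
exists k, j, e, d, x'; split => //; split => //.
by rewrite dx.
Qed.

Lemma nf_eq (R : realType) (A : finType) (p q : pt R (Y A)) :
  reduced p -> reduced q -> gv p = gv q -> loc p = loc q -> p = q.
Proof.
case: p => k1 [d1 x1]; case: q => k2 [d2 x2] r1 r2 eg el.
have lE : forall k (d : cell (Y A) k) (x : 'I_k -> R), (forall j, 0 < x j < 1) ->
    loc (mkpt d x) = codom (sval d).2.
  move=> k d x rx; rewrite /loc; apply/all_filterP/allP => a /codomP [j ->].
  by rewrite /intr gv_cod.
have ec : codom (sval d1).2 = codom (sval d2).2.
  by rewrite -(lE _ _ _ r1) -(lE _ _ _ r2).
have ek : k1 = k2 by have := congr1 size ec; rewrite !size_codom !card_ord.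
subst k2.
have es : (sval d1).2 = (sval d2).2.
  apply/ffunP => j; have := congr1 (fun l => nth ((sval d1).2 j) l j) ec.
  by rewrite !codom_ffun !nth_fgraph_ord.
have ex : x1 = x2.
  apply: funext => j; rewrite -(gv_cod d1 x1) -(gv_cod d2 x2) -es.
  by rewrite /mkpt eg.
have ef : (sval d1).1 = (sval d2).1.
  apply/ffunP => a.
  have n1 := Yvalid_none d1 a; have n2 := Yvalid_none d2 a.
  rewrite es in n1.
  have ga := congr1 (fun g => g a) eg; move: ga; rewrite /gv /=.
  case: ((sval d1).1 a) n1 => [b1|]; case: ((sval d2).1 a) n2 => [b2|] //=.
  - case: b1; case: b2 => //= _ _ /eqP; first by rewrite oner_eq0.
    by rewrite eq_sym oner_eq0.
  - by move=> /= <-.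
  - by move=> h1 /= h2; move: h1; rewrite -h2.
have -> : d1 = d2.
  by apply: val_inj; apply: injective_projections.
by rewrite ex.
Qed.

Lemma complete (R : realType) (A : finType) k1 (d1 : cell (Y A) k1) (x1 : 'I_k1 -> R)
  k2 (d2 : cell (Y A) k2) (x2 : 'I_k2 -> R) :
  in_cube x1 -> in_cube x2 -> gv (mkpt d1 x1) = gv (mkpt d2 x2) ->
  loc (mkpt d1 x1) = loc (mkpt d2 x2) -> real_eq (mkpt d1 x1) (mkpt d2 x2).
Proof.
move=> c1 c2 eg el.
have [r1 [e1 n1]] := reduce d1 c1; have [r2 [e2 n2]] := reduce d2 c2.
have [g1 l1] := eq_inv e1; have [g2 l2] := eq_inv e2.
have r12 : r1 = r2 by apply: nf_eq => //; rewrite -?g1 -?g2 -?l1 -?l2.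
by subst; apply: rst_trans e1 _; exact: rst_sym.
Qed.

Lemma filter_sub (T : eqType) (P Q : pred T) (l : seq T) :
  (forall a, P a -> Q a) -> seq.filter P (seq.filter Q l) = seq.filter P l.
Proof.
by move=> h; rewrite -filter_predI; apply: eq_filter => a /=; case: (boolP (P a)) => // /h ->.
Qed.

Lemma merge_ex (T : eqType) (p q : seq T) :
  uniq p -> uniq q -> seq.filter (mem q) p = seq.filter (mem p) q ->
  exists r, [/\ uniq r, r =i p ++ q, seq.filter (mem p) r = p &
                 seq.filter (mem q) r = q].
Proof.
have [N] := ubnP (size p + size q); elim: N p q => // N IH p q.
case: p => [|x p'].
  move=> _ _ uq _; exists q; split => //; last by apply/all_filterP/allP.
  by rewrite (@eq_filter _ _ pred0) ?filter_pred0.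
case: q => [|y q'].
  move=> _ up _ _; exists (x :: p'); rewrite cats0; split => //.
    by apply/all_filterP/allP.
  by rewrite (@eq_filter _ _ pred0) ?filter_pred0.
move=> hs /andP [xp up] /andP [yq uq].
case: (boolP ((x == y) || (x \in q'))) => xq; last first.
  move=> hf.
  have xq' : (x \in y :: q') = false by rewrite inE; apply/negbTE.
  have hf' : seq.filter (mem (y :: q')) p' = seq.filter (mem p') (y :: q').
    move: hf; rewrite /= xq' => ->.
    have yx : (y == x) = false by move: xq'; rewrite inE eq_sym; case: (y == x).
    rewrite inE yx /=.
    have -> : seq.filter (mem (x :: p')) q' = seq.filter (mem p') q'.
      apply: eq_in_filter => a aq; change ((a \in x :: p') = (a \in p')); rewrite in_cons; case: (a =P x) => // ea; subst a.
      by rewrite inE aq orbT in xq'.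
    done.
  have hs' : (size p' + size (y :: q') < N)%N by move: hs; rewrite /= addSn.
  have uq' : uniq (y :: q') by rewrite /= yq.
  have [r [ur mr fp fq]] := IH p' (y :: q') hs' up uq' hf'.
  have xr : x \notin r by rewrite mr mem_cat negb_or xp /= inE.
  exists (x :: r); split.
  - by rewrite /= xr.
  - move=> a; rewrite in_cons mr !mem_cat !in_cons.
    by case: (a == y); case: (a == x); case: (a \in p'); case: (a \in q').
  - rewrite /= inE eqxx /= -[in RHS]fp; congr cons.
    apply: eq_in_filter => a ar /=; rewrite inE.
    by case: (a =P x) => // ea; subst a; rewrite ar in xr.
  - by rewrite /= ifF ?fq.
case: (boolP ((y == x) || (y \in p'))) => yp; last first.
  move=> hf.
  have yp' : (y \in x :: p') = false by rewrite in_cons; apply/negbTE.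
  have hf' : seq.filter (mem q') (x :: p') = seq.filter (mem (x :: p')) q'.
    have -> : seq.filter (mem q') (x :: p') = seq.filter (mem (y :: q')) (x :: p').
      apply: eq_in_filter => a ap; change ((a \in q') = (a \in y :: q')).
      rewrite in_cons; case: (a =P y) => // ea; subst a.
      by rewrite ap in yp'.
    by rewrite hf /= yp'.
  have hs' : (size (x :: p') + size q' < N)%N by move: hs; rewrite /= addnS.
  have up' : uniq (x :: p') by rewrite /= xp.
  have [r [ur mr fp fq]] := IH (x :: p') q' hs' up' uq hf'.
  have yr : y \notin r by rewrite mr mem_cat negb_or yq andbT inE.
  exists (y :: r); split.
  - by rewrite /= yr.
  - move=> a; rewrite in_cons mr !mem_cat !in_cons.
    by case: (a == y); case: (a == x); case: (a \in p'); case: (a \in q').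
  - rewrite /= ifF ?fp //; apply/negbTE; move: yp; by rewrite !inE.
  - rewrite /= inE eqxx /= -[in RHS]fq; congr cons.
    apply: eq_in_filter => a ar /=; rewrite inE.
    by case: (a =P y) => // ea; subst a; rewrite ar in yr.
rewrite /= !in_cons xq yp => -[exy hf]; subst y.
have hf' : seq.filter (mem q') p' = seq.filter (mem p') q'.
  have -> : seq.filter (mem q') p' = seq.filter (mem (x :: q')) p'.
    apply: eq_in_filter => a ap; change ((a \in q') = (a \in x :: q')).
    by rewrite in_cons; case: (a =P x) => // ea; subst a; rewrite ap in xp.
  rewrite hf; apply: eq_in_filter => a aq; change ((a \in x :: p') = (a \in p')).
  by rewrite in_cons; case: (a =P x) => // ea; subst a; rewrite aq in yq.
have hs' : (size p' + size q' < N)%N by move: hs; rewrite /= addSn addnS => /ltnW.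
have [r [ur mr fp fq]] := IH p' q' hs' up uq hf'.
have xr : x \notin r by rewrite mr mem_cat negb_or xp.
exists (x :: r); split.
- by rewrite /= xr.
- move=> a; rewrite in_cons mr !mem_cat !in_cons.
  by rewrite mem_cat in_cons; case: (a == x); case: (a \in p'); case: (a \in q').
- rewrite /= inE eqxx /= -[in RHS]fp; congr cons.
  apply: eq_in_filter => a ar /=; rewrite inE.
  by case: (a =P x) => // ea; subst a; rewrite ar in xr.
- rewrite /= inE eqxx /= -[in RHS]fq; congr cons.
  apply: eq_in_filter => a ar /=; rewrite inE.
  by case: (a =P x) => // ea; subst a; rewrite ar in xr.
Qed.

Lemma tt_mono (R : realType) m (tt : nat -> R) :
  (forall k, (k < m)%N -> tt k < tt k.+1) ->
  forall k l, (k <= l)%N -> (l <= m)%N -> tt k <= tt l.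
Proof.
move=> inc k l kl; elim: l kl => [|l IH]; first by rewrite leqn0 => /eqP ->.
rewrite leq_eqVlt => /orP [/eqP -> //|kl] lm.
apply: le_trans (IH kl (ltnW lm)) _; exact/ltW/inc.
Qed.

Lemma piece_of (R : realType) m (tt : nat -> R) :
  (forall k, (k < m)%N -> tt k < tt k.+1) ->
  forall l, (0 < l)%N -> (l <= m)%N -> forall t, tt 0 <= t -> t <= tt l ->
  exists k, [/\ (k < l)%N, tt k <= t & t <= tt k.+1].
Proof.
move=> inc; elim=> [//|l IH] _ lm t h0 h1.
case: l IH lm h1 => [|l] IH lm h1; first by exists 0%N.
case: (leP t (tt l.+1)) => h.
  have [k [kl hk1 hk2]] := IH isT (ltnW lm) t h0 h.
  by exists k; split => //; apply: ltnW.
by exists l.+1; split => //; apply: ltW.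
Qed.

Lemma glue_mono (R : realType) m (tt : nat -> R) (f : R -> R) :
  (forall k, (k < m)%N -> tt k < tt k.+1) ->
  (forall k, (k < m)%N -> forall s t, tt k <= s -> s <= t -> t <= tt k.+1 -> f s <= f t) ->
  forall s t, tt 0 <= s -> s <= t -> t <= tt m -> f s <= f t.
Proof.
move=> inc hf s t h0 st h1.
have [m0'|m0] := posnP m.
  subst m; have -> : s = t by apply/eqP; rewrite eq_le st (le_trans h1 h0).
  exact: lexx.
have [i [im hi1 hi2]] := piece_of inc m0 (leqnn m) h0 (le_trans st h1).
have [j [jm hj1 hj2]] := piece_of inc m0 (leqnn m) (le_trans h0 st) h1.
have knots : forall k l, (k <= l)%N -> (l <= m)%N -> f (tt k) <= f (tt l).
  move=> k l kl; elim: l kl => [|l IH]; first by rewrite leqn0 => /eqP ->.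
  rewrite leq_eqVlt => /orP [/eqP -> //|kl] lm.
  apply: le_trans (IH kl (ltnW lm)) _; by apply: (hf l) => //; apply: ltW; apply: inc.
case: (ltngtP i j) => [ij|ji|eij].
- apply: le_trans (hf _ im _ _ hi1 hi2 (lexx _)) _.
  apply: le_trans (knots i.+1 j ij (ltnW jm)) _.
  by apply: (hf j) => //.
- have : t <= s.
    apply: le_trans hj2 (le_trans _ hi1); exact: (tt_mono inc ji (ltnW im)).
  by move=> ts; have -> : s = t by apply/eqP; rewrite eq_le st ts.
- by subst j; exact: (hf i).
Qed.

Lemma itv_split (R : realType) (a b c : R) : a <= b -> b <= c ->
  `[a, c]%classic = `[a, b]%classic `|` `[b, c]%classic.
Proof.
move=> ab bc; apply/seteqP; split => x /=; rewrite !in_itv /=.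
  move=> /andP [h1 h2]; case: (leP x b) => h; [left|right]; apply/andP; split => //.
  exact: ltW.
case=> /andP [h1 h2]; apply/andP; split => //; [exact: le_trans h2 bc|exact: le_trans ab h1].
Qed.

Lemma glue_cont (R : realType) m (tt : nat -> R) (f : R -> R) :
  (forall k, (k < m)%N -> tt k < tt k.+1) -> (0 < m)%N ->
  (forall k, (k < m)%N -> {within `[tt k, tt k.+1], continuous f}) ->
  {within `[tt 0, tt m], continuous f}.
Proof.
move=> inc m0 hf.
suff : forall l, (0 < l)%N -> (l <= m)%N -> {within `[tt 0, tt l], continuous f}.
  by apply.
elim=> [//|l IH] _ lm.
case: l IH lm => [|l] IH lm; first exact: hf.
have h1 : tt 0 <= tt l.+1 by exact: (tt_mono inc (leq0n _) (ltnW lm)).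
have h2 : tt l.+1 <= tt l.+2 by apply: ltW; apply: inc.
rewrite (itv_split h1 h2).
apply: withinU_continuous; try exact: itv_closed.
- exact: (IH isT (ltnW lm)).
- exact: (hf l.+1 lm).
Qed.

Lemma build_list (R : realType) (A : finType) m (tt : nat -> R) (G : R -> A -> R)
    (ls : nat -> seq A) (Loc : R -> seq A) :
  (forall k, (k < m)%N -> tt k < tt k.+1) ->
  tt 0 = 0 -> (0 < m)%N ->
  (forall k, uniq (ls k)) ->
  (forall t a, 0 <= t -> t <= tt m -> 0 <= G t a) ->
  (forall s t a, 0 <= s -> s <= t -> t <= tt m -> G s a <= G t a) ->
  (forall a, G 0 a = 0) ->
  (forall k, (k < m)%N -> forall t, tt k <= t -> t <= tt k.+1 ->
       Loc t = seq.filter (fun a => (0 < G t a) && (G t a < 1)) (ls k)) ->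
  (forall k, (k < m)%N -> forall t a, tt k <= t -> t <= tt k.+1 ->
       0 < G t a -> G t a < 1 -> a \in ls k) ->
  (forall k, (k < m)%N -> forall a, a \notin ls k -> G (tt k) a = G (tt k.+1) a) ->
  forall k, (k <= m)%N -> exists L, [/\ uniq L, (forall a, (a \in L) = (0 < G (tt k) a)) &
     forall t, 0 <= t -> t <= tt k ->
       seq.filter (fun a => (0 < G t a) && (G t a < 1)) L = Loc t].
Proof.
move=> inc t0 m0 uls Gpos Gmono G0 hLoc hin hconst.
have ttm : forall k, (k <= m)%N -> 0 <= tt k.
  by move=> k km; rewrite -t0; apply: (tt_mono inc (leq0n k) km).
elim=> [|k IH] km.
  exists [::]; split => //; first by move=> a; rewrite t0 G0 ltxx.
  move=> t ht0 ht1; rewrite t0 in ht1.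
  have -> : t = 0 by apply/eqP; rewrite eq_le ht1 ht0.
  have e0 : tt 0%N <= 0 by rewrite t0.
  have h01 : 0 <= tt 1%N by exact: ttm 1%N m0.
  rewrite (hLoc 0%N m0 0 e0 h01) /=.
  by rewrite (@eq_filter _ _ pred0) ?filter_pred0 // => a /=; rewrite G0 ltxx.
have k_m : (k < m)%N := km.
have [L [uL mL lL]] := IH (ltnW km).
have tk0 := ttm k (ltnW km); have tk1 := ttm k.+1 km.
have tkk : tt k <= tt k.+1 by apply: ltW; apply: inc.
have tkm : tt k.+1 <= tt m by exact: (tt_mono inc km (leqnn m)).
have tkm' : tt k <= tt m by apply: le_trans tkk tkm.
set q := seq.filter (fun a => (G (tt k) a < 1) && (0 < G (tt k.+1) a)) (ls k).
have uq : uniq q by apply: filter_uniq.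
have hq : seq.filter (mem q) L = seq.filter (mem L) q.
  have e1 : seq.filter (mem q) L = seq.filter (fun a => (0 < G (tt k) a) && (G (tt k) a < 1)) L.
    apply: eq_in_filter => a aL; change ((a \in q) = ((0 < G (tt k) a) && (G (tt k) a < 1))).
    rewrite mem_filter; move: aL; rewrite mL => g0.
    rewrite g0 /=; case: (boolP (G (tt k) a < 1)) => //= g1.
    rewrite (hin k k_m (tt k) a (lexx _) tkk g0 g1) andbT.
    by apply: lt_le_trans g0 (Gmono _ _ _ tk0 tkk tkm).
  have e2 : seq.filter (mem L) q = seq.filter (fun a => (0 < G (tt k) a) && (G (tt k) a < 1)) (ls k).
    rewrite /q -filter_predI; apply: eq_filter => a /=.
    change (((a \in L) && ((G (tt k) a < 1) && (0 < G (tt k.+1) a))) = ((0 < G (tt k) a) && (G (tt k) a < 1))).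
    rewrite mL; case: (boolP (0 < G (tt k) a)) => //= g0.
    case: (G (tt k) a < 1) => //=.
    by apply: lt_le_trans g0 (Gmono _ _ _ tk0 tkk tkm).
  by rewrite e1 e2 (lL (tt k) tk0 (lexx _)) (hLoc k k_m (tt k) (lexx _) tkk).
have [r [ur mr fp fq]] := merge_ex uL uq hq.
exists r; split => //.
  move=> a; rewrite mr mem_cat mL mem_filter.
  case: (boolP (0 < G (tt k) a)) => g0 /=.
    by apply/esym; apply: lt_le_trans g0 (Gmono _ _ _ tk0 tkk tkm).
  have ga : G (tt k) a = 0 by apply/eqP; rewrite eq_le leNgt g0 Gpos.
  rewrite ga ltr01 /=.
  case: (boolP (0 < G (tt k.+1) a)) => g1; rewrite ?andbT ?andbF //.
  apply/negPn/negP => /(hconst k k_m) h.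
  by move: g1; rewrite -h ga ltxx.
move=> t h0 h1.
case: (leP t (tt k)) => htk.
  rewrite -(lL t h0 htk) -fp filter_sub // => a /andP [g0 _].
  change (a \in L); rewrite mL.
  by apply: lt_le_trans g0 (Gmono _ _ _ h0 htk tkm').
rewrite (hLoc k k_m t (ltW htk) h1).
have tm : t <= tt m by apply: le_trans h1 tkm.
have Sq : forall a, (0 < G t a) && (G t a < 1) ->
    (G (tt k) a < 1) && (0 < G (tt k.+1) a).
  move=> a /andP [g0 g1]; apply/andP; split.
    exact: le_lt_trans (Gmono _ _ a tk0 (ltW htk) tm) g1.
  exact: lt_le_trans g0 (Gmono _ _ a h0 h1 tkm).
have -> : seq.filter (fun a => (0 < G t a) && (G t a < 1)) (ls k) =
          seq.filter (fun a => (0 < G t a) && (G t a < 1)) q.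
  by rewrite /q filter_sub.
rewrite -[in RHS]fq filter_sub // => a ha; change (a \in q); rewrite mem_filter Sq //.
by case/andP: ha => g0 g1; rewrite (hin k k_m t a (ltW htk) h1 g0 g1).
Qed.

Lemma uniq_cod (A : finType) k (d : cell (Y A) k) : uniq (codom (sval d).2).
Proof. by case: d => [[f s]] /= /andP [h _]; exact: h. Qed.

Lemma gv_out (R : realType) (A : finType) k (d : cell (Y A) k) a :
  a \notin codom (sval d).2 ->
  exists b : bool, forall x : 'I_k -> R, gv (mkpt d x) a = if b then 1 else 0.
Proof.
rewrite -Yvalid_none => h; case E : ((sval d).1 a) h => [b|] // _.
by exists b => x; rewrite /gv /= E.
Qed.

Lemma gv_cube (R : realType) (A : finType) k (d : cell (Y A) k) (x : 'I_k -> R) a :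
  in_cube x -> 0 <= gv (mkpt d x) a <= 1.
Proof.
move=> cx; case: (boolP (a \in codom (sval d).2)) => [/codomP [j ->]|ao].
  by rewrite gv_cod; exact: cx.
by have [b ->] := gv_out R ao; case: b; rewrite ?lexx ?ler01.
Qed.

Lemma gv_vertex (R : realType) (A : finType) (b : bool) a :
  gv (mkpt (Yvertex A b) (fun _ => (0 : R))) a = if b then 1 else 0.
Proof. by rewrite /gv /= ffunE. Qed.

Theorem proposition3p3 (R : realType) (A : finType) (n : nat) (hA : #|A| = n)
  (alpha : R -> pt R (Y A)) :
  dpath_from_to (Y0 A) (Y1 A) alpha ->
  exists (c : cell (Y A) n) (beta : R -> 'I_n -> R),
    [/\ (forall j, {within `[0, 1], continuous (fun t => beta t j)}),
        (forall j s t, 0 <= s -> s <= t -> t <= 1 -> beta s j <= beta t j),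
        (forall t, 0 <= t <= 1 -> in_cube (beta t)),
        (forall j, beta 0 j = 0 /\ beta 1 j = 1) &
        (forall t, 0 <= t <= 1 -> real_eq (alpha t) (mkpt c (beta t)))].
Proof.
case=> [[m [tt [ns [cs [bs [t0 t1 inc hp]]]]]] ha0 ha1].
have [m0'|m0] := posnP m.
  by subst m; move: t1; rewrite t0 => /eqP; rewrite eq_sym oner_eq0.
have piece : forall k, (k < m)%N -> forall t, tt k <= t -> t <= tt k.+1 ->
    gv (alpha t) = gv (mkpt (cs k) (bs k t)) /\ loc (alpha t) = loc (mkpt (cs k) (bs k t)).
  move=> k km t h1 h2; have [_ _ _ he] := hp k km.
  by apply: eq_inv; apply: he; rewrite h1 h2.
have cube : forall k, (k < m)%N -> forall t, tt k <= t -> t <= tt k.+1 -> in_cube (bs k t).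
  move=> k km t h1 h2; have [_ _ hc _] := hp k km.
  by apply: hc; rewrite h1 h2.
have pof : forall t, 0 <= t -> t <= 1 -> exists k, [/\ (k < m)%N, tt k <= t & t <= tt k.+1].
  move=> t h0 h1; apply: (piece_of inc m0 (leqnn m)); by rewrite ?t0 ?t1.
have Gcube : forall t a, 0 <= t -> t <= 1 -> 0 <= gv (alpha t) a <= 1.
  move=> t a h0 h1; have [k [km hk1 hk2]] := pof t h0 h1.
  rewrite (piece k km t hk1 hk2).1; apply: gv_cube; exact: cube.
have Gmono_piece : forall k, (k < m)%N -> forall s t a, tt k <= s -> s <= t -> t <= tt k.+1 ->
    gv (alpha s) a <= gv (alpha t) a.
  move=> k km s t a h1 st h2.
  have hs1 : s <= tt k.+1 := le_trans st h2.
  have ht1 : tt k <= t := le_trans h1 st.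
  rewrite (piece k km s h1 hs1).1 (piece k km t ht1 h2).1.
  case: (boolP (a \in codom (sval (cs k)).2)) => [/codomP [j ->]|ao].
    rewrite !gv_cod; have [_ hm _ _] := hp k km; exact: hm.
  by have [b hb] := gv_out R ao; rewrite !hb.
have Gmono : forall s t a, 0 <= s -> s <= t -> t <= 1 -> gv (alpha s) a <= gv (alpha t) a.
  move=> s t a h0 st h1.
  apply: (glue_mono (f := fun t => gv (alpha t) a) inc); rewrite ?t0 ?t1 //.
  by move=> k km s' t'; exact: Gmono_piece.
have G0 : forall a, gv (alpha 0) a = 0.
  by move=> a; rewrite (eq_inv ha0).1 gv_vertex.
have G1 : forall a, gv (alpha 1) a = 1.
  by move=> a; rewrite (eq_inv ha1).1 gv_vertex.
have Gcont : forall a, {within `[0, 1], continuous (fun t => gv (alpha t) a)}.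
  move=> a; rewrite -t0 -t1; apply: (glue_cont inc m0) => k km.
  case: (boolP (a \in codom (sval (cs k)).2)) => [/codomP [j ea]|ao].
    have [hc _ _ _] := hp k km.
    apply: (subspace_eq_continuous _ (hc j)) => t; rewrite inE /= in_itv /= => /andP [h1 h2].
    by rewrite /from_subspace (piece k km t h1 h2).1 ea gv_cod.
  have [b hb] := gv_out R ao.
  have cc : continuous (fun _ : subspace `[tt k, tt k.+1]%classic => (if b then 1 else 0 : R)).
    exact: cst_continuous.
  apply: (subspace_eq_continuous _ cc) => t; rewrite inE /= in_itv /= => /andP [h1 h2].
  by rewrite /from_subspace (piece k km t h1 h2).1 hb.
have [L [uL mL lL]] : exists L, [/\ uniq L,
    (forall a, (a \in L) = (0 < gv (alpha (tt m)) a)) &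
    forall t, 0 <= t -> t <= tt m ->
      seq.filter (fun a => (0 < gv (alpha t) a) && (gv (alpha t) a < 1)) L = loc (alpha t)].
  apply: (@build_list R A m tt (fun t a => gv (alpha t) a)
            (fun k => codom (sval (cs k)).2) (fun t => loc (alpha t)) inc t0 m0) => //.
  - by move=> k; exact: uniq_cod.
  - by move=> t a h0 h1; rewrite t1 in h1; case/andP: (Gcube t a h0 h1).
  - by move=> s' t a h0 st h1; rewrite t1 in h1; exact: Gmono.
  - move=> k km t h1 h2; rewrite (piece k km t h1 h2).2 /loc /intr.
    by rewrite (piece k km t h1 h2).1.
  - move=> k km t a h1 h2 g0 g1; apply/negPn/negP => ao.
    have [b hb] := gv_out R ao.
    move: g0 g1; rewrite (piece k km t h1 h2).1 hb.
    by case: (b); rewrite ltxx // ?andbF.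
  - move=> k km a ao; have [b hb] := gv_out R ao.
    have hk : tt k <= tt k.+1 by apply: ltW; apply: inc.
    by rewrite (piece k km _ (lexx _) hk).1 (piece k km _ hk (lexx _)).1 !hb.
have allL : forall a, a \in L by move=> a; rewrite mL t1 G1 ltr01.
have sL : size L == n.
  have pL : perm_eq L (enum A).
    by apply: uniq_perm => //; [exact: enum_uniq | move=> a; rewrite mem_enum allL].
  by rewrite (perm_size pL) -cardE hA.
pose tL := Tuple sL.
pose sig := [ffun j : 'I_n => tnth tL j].
have csig : codom sig = L.
  rewrite codomE -[RHS](map_tnth_enum tL); apply: eq_map => j; by rewrite ffunE.
have vc : Yvalid ([ffun _ => None], sig).
  apply/andP; split.
    by rewrite /injectiveb /dinjectiveb -codomE csig.
  by apply/forallP => a; rewrite ffunE /= csig allL.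
pose c : cell (Y A) n := exist _ ([ffun _ => None], sig) vc.
exists c, (fun t j => gv (alpha t) (sig j)).
split.
- by move=> j; exact: Gcont.
- by move=> j s t h0 st h1; exact: Gmono.
- by move=> t /andP [h0 h1] j; exact: Gcube.
- by move=> j; rewrite G0 G1.
move=> t /andP [h0 h1]; have [k [km hk1 hk2]] := pof t h0 h1.
have [_ _ _ he] := hp k km.
apply: rst_trans (he t _) _; first by rewrite hk1 hk2.
have gc : gv (mkpt c (fun j => gv (alpha t) (sig j))) = gv (alpha t).
  apply: funext => a; have : a \in codom sig by rewrite csig allL.
  by case/codomP => j ->; exact: (gv_cod c).
apply: complete.
- exact: cube.
- by move=> j; apply: Gcube.
- by rewrite gc (piece k km t hk1 hk2).1.
rewrite -(piece k km t hk1 hk2).2 -(lL t h0); last by rewrite t1.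
rewrite /loc /intr gc.
by rewrite /cod /= csig.
Qed.
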